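(* There is an absolute constant $C$ such that for the Adaptive-Threshold Dealer with any $n$ and $d$, and every stage $\tau\ge 0$ of the Adaptive phase, $\mathbb E[\Phi(\mathbf X^\tau)]\le C\cdot d$.
   Context: Adaptive-Threshold Dealer with $d$ mini-decks on $n$ cards ($d\mid n$): the deck is split into $d$ mini-decks, each a fixed ordered stack of $n/d$ cards. Let $L_{i,t}$ be the number of cards drawn from mini-deck $i$ before turn $t$. Adaptive phase (turns $t=1,\dots,n-2d$): repeatedly sample $i\in[d]$ uniformly until $L_{i,t}<\lceil t/d\rceil+1$, then draw the top card of mini-deck $i$. Stage $\tau\ge1$ consists of the turns $t$ with $\lceil t/d\rceil=\tau$ (turns $(\tau-1)d+1,\dots,\tau d$). Let $\mathbf L_i^\tau$ be the number of cards drawn from mini-deck $i$ by the end of stage $\tau$ (i.e. in turns $1,\dots,\tau d$), and $\mathbf X_i^\tau=\tau+2-\mathbf L_i^\tau$ the number of holes at the end of stage $\tau$; $\mathbf X^0=(2,\dots,2)$. With $\epsilon=1/200$, the potential of a vector $x\in\mathbb Z^d$ is $\Phi(x)=\sum_{i=1}^d(1+\epsilon)^{x_i}$. *)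

(* Defs.v *)
From HB Require Import structures.
From mathcomp Require Import all_boot all_order all_algebra.
From mathcomp Require Import reals.
Set Implicit Arguments. Unset Strict Implicit. Unset Printing Implicit Defensive.
Import Order.TTheory GRing.Theory Num.Theory.
Local Open Scope ring_scope.

(* A state of the dealer: L i = number of cards drawn so far from mini-deck i. *)
Definition state (d : nat) := {ffun 'I_d -> nat}.

Definition ceil_div (t d : nat) : nat := ((t + d.-1) %/ d)%N.

Definition eligible (d t : nat) (L : state d) : {set 'I_d} :=
  [set i | (L i < (ceil_div t d).+1)%N].

Definition draw (d : nat) (L : state d) (i : 'I_d) : state d :=
  [ffun j => if j == i then (L j).+1 else L j].

(* One turn t of the Adaptive phase: i is resampled uniformly from [d] until it
   is eligible, i.e. i is uniform over the (nonempty) eligible set.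
   step_exp t f L = E[f(state after turn t) | state before turn t = L]. *)
Definition step_exp (R : realFieldType) (d t : nat) (f : state d -> R) (L : state d) : R :=
  (#|eligible t L|%:R)^-1 * \sum_(i in eligible t L) f (draw L i).

(* exp_from t k f L = E[f(state after turns t, ..., t+k-1) | state before turn t = L]. *)
Fixpoint exp_from (R : realFieldType) (d : nat) (t k : nat) (f : state d -> R) (L : state d)
  {struct k} : R :=
  match k with
  | 0 => f L
  | k'.+1 => step_exp t (fun L' => exp_from t.+1 k' f L') L
  end.

Definition L0 (d : nat) : state d := [ffun => 0%N].

Definition holes (d tau : nat) (L : state d) : 'I_d -> int :=
  fun i => (tau.+2)%:Z - (L i)%:Z.

Definition eps (R : realFieldType) : R := (200%:R)^-1.

Definition Phi (R : realFieldType) (d : nat) (x : 'I_d -> int) : R :=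
  \sum_(i < d) (1 + eps R) ^ (x i).

(* E[Phi(X^tau)]: stage tau ends at turn tau*d, the process starts at turn 1. *)
Definition expected_Phi (R : realFieldType) (d tau : nat) : R :=
  exp_from 1 (tau * d) (fun L => Phi R (holes tau L)) (L0 d).

(* Main.v *)
Require Import Defs.
From HB Require Import structures.
From mathcomp Require Import all_boot all_order all_algebra.
From mathcomp Require Import reals.
From mathcomp Require Import ring lra zify.
Set Implicit Arguments. Unset Strict Implicit. Unset Printing Implicit Defensive.
Import Order.TTheory GRing.Theory Num.Theory.
Local Open Scope ring_scope.

Lemma step_exp_ext (R : realFieldType) d t (f g : state d -> R) L :
  (forall i, i \in eligible t L -> f (draw L i) = g (draw L i)) ->
  step_exp t f L = step_exp t g L.
Proof. by move=> H; rewrite /step_exp; congr (_ * _); apply: eq_bigr. Qed.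

Lemma step_mono (R : realFieldType) d t (f g : state d -> R) L :
  (forall i, i \in eligible t L -> f (draw L i) <= g (draw L i)) ->
  step_exp t f L <= step_exp t g L.
Proof.
move=> H; rewrite /step_exp; apply: ler_wpM2l; first by rewrite invr_ge0.
by apply: ler_sum.
Qed.

Lemma step_affine (R : realFieldType) d t (f : state d -> R) L (r b : R) :
  0 <= b -> step_exp t (fun L' => r * f L' + b) L <= r * step_exp t f L + b.
Proof.
move=> hb; rewrite /step_exp big_split /= -mulr_sumr sumr_const.
set k := #|_|.
rewrite mulrDr mulrCA lerD2l.
case: (posnP k) => [->|kpos]; first by rewrite mulr0n mulr0.
rewrite -[b *+ k]mulr_natr mulrCA mulVf ?mulr1 //.
by rewrite pnatr_eq0 -lt0n.
Qed.

Lemma exp_from_split (R : realFieldType) d k1 k2 t (f : state d -> R) L :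
  exp_from t (k1 + k2) f L = exp_from t k1 (exp_from (t + k1) k2 f) L.
Proof.
elim: k1 t L => [|k1 IH] t L /=; first by rewrite addn0.
apply: step_exp_ext => i _.
by rewrite IH addSnnS.
Qed.

Definition Inv d (s : nat) (L : state d) :=
  (\sum_(i < d) L i = s)%N /\ forall i, (L i <= ceil_div s d + 1)%N.

Lemma draw_sum d (L : state d) i : (\sum_(j < d) draw L i j = (\sum_(j < d) L j).+1)%N.
Proof.
rewrite (bigD1 i) //= [in RHS](bigD1 i) //= ffunE eqxx addSn; congr (_.+1 + _)%N.
by apply: eq_bigr => j /negbTE ji; rewrite ffunE ji.
Qed.

Lemma Inv_draw d t (L : state d) i : (0 < t)%N -> Inv t.-1 L -> i \in eligible t L ->
  Inv t (draw L i).
Proof.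
move=> t0 [hs hb]; rewrite inE => hi; split.
  by rewrite draw_sum hs prednK.
move=> j; rewrite ffunE; case: eqP => [->|_].
  by rewrite addn1.
apply: (leq_trans (hb j)); rewrite leq_add2r /ceil_div leq_div2r //.
by rewrite leq_add2r leq_pred.
Qed.

Lemma exp_from_affine (R : realFieldType) d k t (f g : state d -> R) (r b : R) L :
  (0 < t)%N -> 0 <= r -> 0 <= b -> Inv t.-1 L ->
  (forall L', Inv (t.-1 + k) L' -> f L' <= r * g L' + b) ->
  exp_from t k f L <= r * exp_from t k g L + b.
Proof.
move=> t0 r0 b0; elim: k t t0 L => [|k IH] t t0 L hI H /=.
  by apply: H; rewrite addn0.
apply: (le_trans _ (step_affine t (fun L' => exp_from t.+1 k g L') L r b0)).
apply: step_mono => i hi.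
apply: IH => //; first by apply: Inv_draw.
by move=> L' HL; apply: H; move: HL; rewrite addnS -addSn prednK.
Qed.


Definition w (R : realFieldType) (d c n : nat) : R :=
  let N : R := n%:R in let D : R := d%:R in
  match c with
  | 0 => N * D ^+ 2
  | 1 => N * (N - 1) * D / 3%:R
  | 2 => N * (N - 1) * (N - 2) / 12%:R
  | _ => 0
  end.

Lemma nn1 (R : realFieldType) (n : nat) : 0 <= (n%:R : R) * (n%:R - 1).
Proof. case: n => [|n]; first by rewrite mul0r. rewrite -natr1 addrK. have := ler0n R n. nra. Qed.

Lemma nn2 (R : realFieldType) (n : nat) : 0 <= (n%:R : R) * (n%:R - 1) * (n%:R - 2).
Proof.
case: n => [|[|n]]; first by rewrite !mul0r.
  by rewrite subrr mulr0 mul0r.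
have h : (n.+2%:R : R) = n%:R + 2 by rewrite -addn2 natrD.
rewrite h; have := ler0n R n; nra.
Qed.

Lemma w_ge0 (R : realFieldType) d c n : 0 <= w R d c n.
Proof.
have D0 := ler0n R d; have N0 := ler0n R n.
case: c => [|[|[|c]]] //=.
- by apply: mulr_ge0 => //; apply: exprn_ge0.
- apply: mulr_ge0; last by rewrite invr_ge0 ler0n.
  by apply: mulr_ge0 => //; apply: nn1.
- apply: mulr_ge0; last by rewrite invr_ge0 ler0n.
  by apply: nn2.
Qed.

Lemma w_le (R : realFieldType) d c n : (n <= d)%N -> w R d c n <= (d%:R) ^+ 3.
Proof.
move=> nd; have D0 := ler0n R d; have N0 := ler0n R n.
have ND' : (n%:R : R) <= d%:R by rewrite ler_nat.
have ND : (0:R) <= d%:R - n%:R by rewrite subr_ge0.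
have h1 := nn1 R n; have h2 := nn2 R n.
case: c => [|[|[|c]]] /=; last by apply: exprn_ge0.
- have := mulr_ge0 (mulr_ge0 D0 D0) (ND : 0 <= d%:R - n%:R); rewrite !exprS expr0; nra.
- have h : (n%:R : R) * (n%:R - 1) * d%:R <= d%:R ^+ 3.
    have h3 : (n%:R : R) * (n%:R - 1) <= d%:R * d%:R by nra.
    rewrite !exprS expr0 mulr1; nra.
  have := mulr_ge0 h1 D0; lra.
- have h : (n%:R : R) * (n%:R - 1) * (n%:R - 2) <= d%:R ^+ 3.
    have h3 : (n%:R : R) * (n%:R - 1) <= d%:R * d%:R by nra.
    rewrite !exprS expr0 mulr1; nra.
  lra.
Qed.

Lemma natS (R : realFieldType) n : (n.+1%:R : R) = n%:R + 1.
Proof. by rewrite -natr1. Qed.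

Lemma w_inc (R : realFieldType) d c n : w R d c n <= w R d c n.+1.
Proof.
have D0 := ler0n R d; have N0 := ler0n R n; have h1 := nn1 R n.
case: c => [|[|[|c]]] //=; rewrite natS.
- have := mulr_ge0 D0 D0; rewrite expr2; nra.
- have h : (n%:R : R) * (n%:R - 1) * d%:R <= (n%:R + 1) * (n%:R + 1 - 1) * d%:R.
    have := mulr_ge0 N0 D0; nra.
  lra.
- have h : (n%:R : R) * (n%:R - 1) * (n%:R - 2) <= (n%:R + 1) * (n%:R + 1 - 1) * (n%:R + 1 - 2).
    nra.
  lra.
Qed.

Lemma w_full (R : realFieldType) d n : w R d 0 n.+1 - w R d 0 n = d%:R ^+ 2.
Proof. by rewrite /= natS; ring. Qed.

Lemma w_0 (R : realFieldType) d c : w R d c 0 = 0.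
Proof. by case: c => [|[|[|c]]] /=; rewrite ?mul0r. Qed.

Lemma w_step (R : realFieldType) d c n : (n.+1 <= d)%N -> (0 < c)%N ->
  d%:R * (w R d c n.+1 - w R d c n) <= w R d c.-1 n - w R d c n.
Proof.
move=> nd c0.
have D0 := ler0n R d; have N0 := ler0n R n; have h1 := nn1 R n; have h2 := nn2 R n.
have ND : (n%:R + 1 : R) <= d%:R by rewrite -natS ler_nat.
case: c c0 => [|[|[|[|c]]]] // _ /=; rewrite ?(natS R n).
-
  have e : (n%:R + 1) * (n%:R + 1 - 1) * d%:R / 3%:R - n%:R * (n%:R - 1) * d%:R / 3%:R
           = 2%:R * n%:R * d%:R / 3%:R :> R by field.
  rewrite e.
  have : (n%:R : R) * d%:R * (n%:R - 1) <= n%:R * d%:R * d%:R.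
    by apply: ler_wpM2l; [exact: mulr_ge0 | lra].
  rewrite expr2; lra.
-
  have e : (n%:R + 1) * (n%:R + 1 - 1) * (n%:R + 1 - 2) / 12%:R
           - n%:R * (n%:R - 1) * (n%:R - 2) / 12%:R
           = n%:R * (n%:R - 1) / 4%:R :> R by field.
  rewrite e.
  have : (n%:R : R) * (n%:R - 1) * (n%:R - 2) <= n%:R * (n%:R - 1) * d%:R.
    by apply: ler_wpM2l => //; lra.
  lra.
-
  lra.
- lra.
Qed.

Lemma w_start (R : realFieldType) d c : (4 <= d)%N -> (c <= 2)%N ->
  d%:R ^+ 3 / 32%:R <= w R d c d.
Proof.
move=> d4 c2.
have D4 : (4%:R : R) <= d%:R by rewrite ler_nat.
have key : d%:R ^+ 3 / 32%:R <= (d%:R : R) * (d%:R - 1) * (d%:R - 2) / 12%:R.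
  have : (0 : R) <= d%:R * (5%:R * d%:R ^+ 2 - 24%:R * d%:R + 16%:R).
    apply: mulr_ge0; first lra.
    have : (0:R) <= (d%:R - 4) * (5%:R * d%:R - 4) by apply: mulr_ge0; lra.
    rewrite expr2; lra.
  rewrite !exprS expr0 mulr1; lra.
case: c c2 => [|[|[|c]]] // _ /=.
- apply: (le_trans key).
  have : (d%:R : R) * (d%:R - 1) * (d%:R - 2) <= d%:R * d%:R ^+ 2.
    rewrite expr2; nra.
  lra.
- apply: (le_trans key).
  have : (d%:R : R) * (d%:R - 1) * (d%:R - 2) <= d%:R * (d%:R - 1) * d%:R.
    apply: ler_wpM2l; [apply: mulr_ge0; lra | lra].
  lra.
Qed.


Definition aa (R : realFieldType) : R := 1 + eps R.
Definition qq (R : realFieldType) : R := 1 - (aa R)^-1.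

Lemma aa_val (R : realFieldType) : aa R = 201%:R / 200%:R.
Proof. by rewrite /aa /eps; field. Qed.
Lemma qq_val (R : realFieldType) : qq R = 201%:R^-1.
Proof. by rewrite /qq aa_val; field. Qed.

Lemma aa_ge1 (R : realFieldType) : 1 <= aa R.
Proof. rewrite aa_val; lra. Qed.
Lemma qq_ge0 (R : realFieldType) : 0 <= qq R.
Proof. rewrite qq_val; lra. Qed.

Lemma qq_mul (R : realFieldType) k : qq R * aa R ^+ k.+1 = aa R ^+ k.+1 - aa R ^+ k.
Proof. rewrite exprSr; set x := aa R ^+ k. by rewrite qq_val aa_val; field. Qed.

Definition ee d (s : nat) (L : state d) i := (s.+2 - L i)%N.
Definition cc d (s : nat) (L : state d) i := (s.+1 - L i)%N.

Definition Phit (R : realFieldType) d s (L : state d) : R :=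
  \sum_(i < d) (aa R ^+ ee s L i - aa R).

Definition Bf (R : realFieldType) d s n (L : state d) : R :=
  n%:R / d%:R + (\sum_(i < d) w R d (cc s L i) n) / d%:R ^+ 4.

Definition Vf (R : realFieldType) d s n (L : state d) : R := 1 + qq R * (2 - Bf R s n L).

Definition Psi (R : realFieldType) d s n (L : state d) : R := Phit R s L * Vf R s n L.

Lemma Phit_draw (R : realFieldType) d s (L : state d) i : (L i <= s)%N ->
  Phit R s (draw L i) = Phit R s L - qq R * aa R ^+ ee s L i.
Proof.
move=> hi; rewrite /Phit (bigD1 i) //= [in RHS](bigD1 i) //=.
have -> : \sum_(j < d | j != i) (aa R ^+ ee s (draw L i) j - aa R) =
          \sum_(j < d | j != i) (aa R ^+ ee s L j - aa R).
  by apply: eq_bigr => j /negbTE ji; rewrite /ee ffunE ji.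
rewrite /ee ffunE eqxx subSS.
have -> : (s.+2 - L i = (s.+1 - L i).+1)%N by rewrite subSn // ltnW // ltnS.
rewrite qq_mul; ring.
Qed.

Lemma sumw_draw (R : realFieldType) d s (L : state d) i n :
  \sum_(l < d) w R d (cc s (draw L i) l) n =
  \sum_(l < d) w R d (cc s L l) n + (w R d (cc s L i).-1 n - w R d (cc s L i) n).
Proof.
rewrite (bigD1 i) //= [in RHS](bigD1 i) //=.
have -> : \sum_(j < d | j != i) w R d (cc s (draw L i) j) n =
          \sum_(j < d | j != i) w R d (cc s L j) n.
  by apply: eq_bigr => j /negbTE ji; rewrite /cc ffunE ji.
rewrite /cc ffunE eqxx subnS; ring.
Qed.

Lemma Bf_le2 (R : realFieldType) d s n (L : state d) : (0 < d)%N -> (n <= d)%N ->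
  Bf R s n L <= 2.
Proof.
move=> d0 nd; rewrite /Bf.
have D0 : (0 : R) < d%:R by rewrite ltr0n.
have h1 : (n%:R : R) / d%:R <= 1 by rewrite ler_pdivrMr // mul1r ler_nat.
have h2 : (\sum_(i < d) w R d (cc s L i) n) <= d%:R ^+ 4.
  apply: le_trans (_ : \sum_(i < d) (d%:R : R) ^+ 3 <= _).
    by apply: ler_sum => i _; apply: w_le.
  by rewrite sumr_const card_ord -[_ *+ d]mulr_natr -exprSr.
have h3 : (\sum_(i < d) w R d (cc s L i) n) / d%:R ^+ 4 <= 1.
  by rewrite ler_pdivrMr ?exprn_gt0 // mul1r.
lra.
Qed.

Lemma Vf_ge1 (R : realFieldType) d s n (L : state d) : (0 < d)%N -> (n <= d)%N ->
  1 <= Vf R s n L.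
Proof.
move=> d0 nd; rewrite /Vf; have := Bf_le2 R s L d0 nd; have := qq_ge0 R.
move=> q0 hb; have : 0 <= qq R * (2 - Bf R s n L) by apply: mulr_ge0; lra.
lra.
Qed.

Definition J d s (L : state d) := forall i, (L i <= s.+1)%N.

Lemma Phit_ge0 (R : realFieldType) d s (L : state d) : J s L -> 0 <= Phit R s L.
Proof.
move=> hJ; rewrite /Phit; apply: sumr_ge0 => i _; rewrite subr_ge0.
have := aa_ge1 R => a1.
rewrite -{1}(expr1 (aa R)); apply: ler_weXn2l => //.
by rewrite /ee subn_gt0 ltnS.
Qed.

Lemma one_step (R : realFieldType) d s n t (L : state d) :
  (0 < d)%N -> (n.+1 <= d)%N -> ceil_div t d = s -> J s L ->
  step_exp t (Psi R s n) L <= Psi R s n.+1 L.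
Proof.
move=> d0 nd hs hJ; rewrite /step_exp.
set E := eligible t L.
have hE : forall i, (i \in E) = (L i <= s)%N by move=> i; rewrite inE hs ltnS.
set P := Phit R s L; set V := Vf R s n.+1 L; set q := qq R; set a := aa R.
have P0 : 0 <= P by apply: Phit_ge0.
have V1 : 1 <= V by apply: Vf_ge1.
have q0 : 0 <= q by apply: qq_ge0.
have a1 : 1 <= a by apply: aa_ge1.
have D0 : (0 : R) < d%:R by rewrite ltr0n.
have D4 : (0 : R) < d%:R ^+ 4 by apply: exprn_gt0.
set k := #|E|.
case: (posnP k) => [k0|kpos].
  rewrite k0 invr0 mul0r /Psi -/P -/V; apply: mulr_ge0 => //; lra.
pose Di i := Bf R s n.+1 L - Bf R s n (draw L i).
pose T := \sum_(l < d) (w R d (cc s L l) n.+1 - w R d (cc s L l) n).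
pose h i := w R d (cc s L i).-1 n - w R d (cc s L i) n.
pose phi i := a ^+ ee s L i - a.
have HV : forall i, Vf R s n (draw L i) = V + q * Di i.
  by move=> i; rewrite /V /Vf /Di /q; ring.
have HD : forall i, d%:R ^+ 4 * Di i = d%:R ^+ 3 + T - h i.
  move=> i; rewrite /Di /Bf sumw_draw natS /T /h sumrB.
  set A := \sum_(l < d) w R d (cc s L l) n.
  set B := \sum_(l < d) w R d (cc s L l) n.+1.
  set c1 := w R d (cc s L i).-1 n; set c2 := w R d (cc s L i) n.
  field; by rewrite pnatr_eq0 -lt0n.
have T0 : 0 <= T by apply: sumr_ge0 => l _; rewrite subr_ge0 w_inc.
have Di0 : forall i, 0 <= Di i.
  move=> i; rewrite -(pmulr_rge0 _ D4) HD.
  have : h i <= d%:R ^+ 3.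
    have := @w_le R d (cc s L i).-1 n (ltnW nd); have := @w_ge0 R d (cc s L i) n.
    rewrite /h; lra.
  lra.
have SD : \sum_(i in E) Di i <= 1.
  rewrite -(ler_pM2l D4) mulr1 mulr_sumr.
  rewrite (eq_bigr (fun i => d%:R ^+ 3 + (T - h i))); last by move=> i _; rewrite HD addrA.
  rewrite big_split /=.
  have e4 : (d%:R : R) ^+ 4 = \sum_(l < d) (d%:R : R) ^+ 3.
    by rewrite sumr_const card_ord exprSr mulr_natr.
  rewrite e4 [X in _ <= X](bigID (fun l => l \in E)) /= lerD2l.
  (* sum_E (T - h) <= sum_notE D^3 *)
  have h1 : \sum_(i in E) (T - h i) <= d%:R * T - \sum_(i in E) h i.
    rewrite sumrB lerD2r.
    have -> : d%:R * T = \sum_(l < d) T by rewrite sumr_const card_ord mulr_natl.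
    rewrite [X in _ <= X](bigID (fun l => l \in E)) /= lerDl.
    by apply: sumr_ge0.
  apply: (le_trans h1).
  have h2 : d%:R * T = \sum_(l in E) (d%:R * (w R d (cc s L l) n.+1 - w R d (cc s L l) n))
        + \sum_(l < d | l \notin E) d%:R ^+ 3.
    rewrite /T mulr_sumr (bigID (fun l => l \in E)) /=; congr (_ + _).
    apply: eq_bigr => l; rewrite hE -ltnNge => hl.
    have -> : cc s L l = 0%N by rewrite /cc; apply/eqP; rewrite subn_eq0.
    by rewrite w_full -exprS.
  rewrite h2.
  suff : \sum_(l in E) (d%:R * (w R d (cc s L l) n.+1 - w R d (cc s L l) n)) <= \sum_(i in E) h i.
    lra.
  apply: ler_sum => i; rewrite hE => hi.
  apply: w_step => //; by rewrite /cc subn_gt0 ltnS.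
have SP : P <= \sum_(i in E) phi i.
  rewrite /P /Phit (bigID (fun l => l \in E)) /=.
  rewrite [X in _ + X <= _]big1 ?addr0 //.
  move=> l; rewrite hE -ltnNge => hl.
  have -> : ee s L l = 1%N by rewrite /ee; have := hJ l; lia.
  by rewrite expr1 subrr.
have Hterm : forall i, i \in E ->
    Psi R s n (draw L i) <= P * V + (q * P) * Di i - (q * V) * phi i.
  move=> i hi; rewrite /Psi HV Phit_draw -?hE //.
  have ha : a <= a ^+ ee s L i.
    rewrite -{1}(expr1 a); apply: ler_weXn2l => //.
    by move: hi; rewrite hE /ee; lia.
  have := Di0 i; rewrite /phi -/P -/a -/q.
  set x := a ^+ ee s L i; set y := Di i => y0.
  have x0 : 0 <= x by apply: le_trans ha; lra.
  have h1 : 0 <= q * (q * x * y) by apply: mulr_ge0 => //; apply: mulr_ge0 => //; apply: mulr_ge0.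
  have h2 : 0 <= q * V * a by apply: mulr_ge0; [apply: mulr_ge0; lra|lra].
  nra.
rewrite mulrC ler_pdivrMr ?ltr0n //.
apply: le_trans (ler_sum _ Hterm) _.
rewrite sumrB big_split /= -!mulr_sumr sumr_const -/k.
have : 0 <= q * P * (1 - \sum_(i in E) Di i) by apply: mulr_ge0; [apply: mulr_ge0|lra].
have : 0 <= q * P * (V - 1) by apply: mulr_ge0; [apply: mulr_ge0|lra].
have : 0 <= q * V * (\sum_(i in E) phi i - P) by apply: mulr_ge0; [apply: mulr_ge0; lra|lra].
rewrite -mulr_natr /Psi -/P -/V.
nra.
Qed.


Lemma ceil_stage d s n : (0 < d)%N -> (n < d)%N -> (0 < s)%N ->
  ceil_div (s * d - n) d = s.
Proof.
move=> d0 nd s0; rewrite /ceil_div.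
have -> : (s * d - n + d.-1 = s * d + (d.-1 - n))%N.
  have : (d <= s * d)%N by rewrite leq_pmull.
  lia.
rewrite divnMDl // divn_small ?addn0 //; lia.
Qed.

Lemma stage_lemma (R : realFieldType) d s n (L : state d) :
  (0 < d)%N -> (0 < s)%N -> (n <= d)%N -> J s L ->
  exp_from (s * d - n).+1 n (Psi R s 0) L <= Psi R s n L.
Proof.
move=> d0 s0; elim: n L => [|n IH] L nd hJ /=; first by rewrite lexx.
have sd : (d <= s * d)%N by rewrite leq_pmull.
have ht : ceil_div (s * d - n.+1).+1 d = s.
  have -> : ((s * d - n.+1).+1 = s * d - n)%N by lia.
  by apply: ceil_stage.
apply: le_trans (one_step R d0 nd ht hJ).
apply: step_mono => i hi.
have -> : ((s * d - n.+1).+2 = (s * d - n).+1)%N by lia.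
apply: IH; first by apply: ltnW.
move=> j; rewrite ffunE; case: eqP => [->|_]; last by apply: hJ.
by move: hi; rewrite inE ht.
Qed.


Lemma ceil_mul d s : (0 < d)%N -> ceil_div (s * d) d = s.
Proof. by move=> d0; rewrite /ceil_div divnMDl // divn_small ?addn0 // prednK. Qed.

Lemma Inv_J d s (L : state d) : (0 < d)%N -> Inv (s * d) L -> J s L.
Proof. by move=> d0 [_ hb] i; have := hb i; rewrite ceil_mul // addn1. Qed.

Lemma count_low d s (L : state d) : (0 < d)%N -> Inv (s * d) L ->
  (2 * \sum_(i < d) (L i < s : nat) <= d)%N.
Proof.
move=> d0 [hs hb].
have h : (\sum_(i < d) (L i + 2 * (L i < s)) <= \sum_(i < d) s.+1)%N.
  apply: leq_sum => i _; have := hb i; rewrite ceil_mul //.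
  case: ltnP => /= hi; lia.
move: h; rewrite big_split /= hs -big_distrr /= sum_nat_const card_ord.
set c := (\sum_(i < d) _)%N; lia.
Qed.

Lemma Phit_succ (R : realFieldType) d s (L : state d) : J s L ->
  Phit R s.+1 L = aa R * Phit R s L + d%:R * (aa R ^+ 2 - aa R).
Proof.
move=> hJ; rewrite /Phit mulr_sumr.
have -> : \sum_(i < d) (aa R ^+ ee s.+1 L i - aa R) =
   \sum_(i < d) (aa R * (aa R ^+ ee s L i - aa R) + (aa R ^+ 2 - aa R)).
  apply: eq_bigr => i _.
  have -> : ee s.+1 L i = (ee s L i).+1 by rewrite /ee subSn //; have := hJ i; lia.
  rewrite exprS; ring.
by rewrite big_split /= sumr_const card_ord mulr_natl.
Qed.

Lemma Vf0 (R : realFieldType) d s (L : state d) : Vf R s 0 L = 1 + 2%:R * qq R.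
Proof.
rewrite /Vf /Bf big1; last by move=> i _; rewrite w_0.
rewrite !mul0r; ring.
Qed.

Lemma Bf_start (R : realFieldType) d s (L : state d) : (4 <= d)%N -> Inv (s * d) L ->
  1 + 64%:R^-1 <= Bf R s.+1 d L.
Proof.
move=> d4 hI; have d0 : (0 < d)%N by apply: leq_trans d4.
have hJ := Inv_J d0 hI.
have D0 : (0 : R) < d%:R by rewrite ltr0n.
set c : R := d%:R ^+ 3 / 32%:R.
have c0 : 0 <= c by apply: mulr_ge0; [apply: exprn_ge0; lra| rewrite invr_ge0 ler0n].
have h1 : \sum_(i < d) (1 - (L i < s : nat)%:R) * c <= \sum_(i < d) w R d (cc s.+1 L i) d.
  apply: ler_sum => i _; case: ltnP => hi /=.
    by rewrite subrr mul0r w_ge0.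
  rewrite subr0 mul1r; apply: w_start => //.
  by rewrite /cc; have := hJ i; lia.
have hcnt := count_low d0 hI.
move: h1; rewrite -mulr_suml sumrB sumr_const card_ord -natr_sum.
set m := (\sum_(i < d) _)%N => h1.
have hm : 2%:R * (m%:R : R) <= d%:R by rewrite -natrM ler_nat.
have h2 : d%:R ^+ 4 / 64%:R <= \sum_(i < d) w R d (cc s.+1 L i) d.
  apply: le_trans h1; rewrite /c.
  have e : (d%:R : R) ^+ 4 / 64%:R = (d%:R / 2%:R) * (d%:R ^+ 3 / 32%:R) by rewrite exprS; field.
  rewrite e; apply: ler_wpM2r => //.
  rewrite -[1 *+ d]/(d%:R); lra.
rewrite /Bf divff ?pnatr_eq0 -?lt0n // lerD2l.
rewrite ler_pdivlMr ?exprn_gt0 //.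
by rewrite mulrC.
Qed.

Definition rho (R : realFieldType) : R :=
  aa R * (1 + qq R * (63%:R / 64%:R)) / (1 + 2%:R * qq R).
Definition bb (R : realFieldType) : R := (aa R ^+ 2 - aa R) * (1 + qq R * (63%:R / 64%:R)).

Lemma transition (R : realFieldType) d s (L : state d) : (4 <= d)%N -> Inv (s * d) L ->
  Psi R s.+1 d L <= rho R * Psi R s 0 L + bb R * d%:R.
Proof.
move=> d4 hI; have d0 : (0 < d)%N by apply: leq_trans d4.
have hJ := Inv_J d0 hI.
have hB := Bf_start R d4 hI.
rewrite /Psi Phit_succ // Vf0.
set P := Phit R s L.
have P0 : 0 <= P by apply: Phit_ge0.
have a1 := aa_ge1 R; have q0 := qq_ge0 R.
have D0 := ler0n R d.
have e : rho R * (P * (1 + 2%:R * qq R)) + bb R * d%:R =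
   (aa R * P + d%:R * (aa R ^+ 2 - aa R)) * (1 + qq R * (63%:R / 64%:R)).
  rewrite /rho /bb; field.
  rewrite qq_val; apply/eqP => h; have : (0:R) < 1 + 2%:R * 201%:R^-1 by lra.
  by rewrite h ltxx.
rewrite e; apply: ler_wpM2l.
  have h : 0 <= aa R ^+ 2 - aa R by rewrite expr2; nra.
  have := mulr_ge0 D0 h; nra.
rewrite /Vf; have : qq R * (2 - Bf R s.+1 d L) <= qq R * (63%:R / 64%:R).
  by apply: ler_wpM2l => //; lra.
lra.
Qed.

Lemma Inv0 d : Inv 0 (L0 d).
Proof.
split; first by rewrite big1 // => i _; rewrite ffunE.
by move=> i; rewrite ffunE.
Qed.

Lemma numeric1 (R : realFieldType) : (aa R ^+ 2 - aa R) * (1 + 2%:R * qq R) <= 200%:R.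
Proof.
rewrite aa_val qq_val expr2.
have -> : ((201%:R / 200%:R * (201%:R / 200%:R) - 201%:R / 200%:R) * (1 + 2%:R * 201%:R^-1) : R)
   = 203%:R / (200%:R * 200%:R) by field.
lra.
Qed.

Lemma numeric2 (R : realFieldType) : rho R * 200%:R + bb R <= 200%:R.
Proof.
have -> : rho R = (201%:R * (64%:R * 201%:R + 63%:R)) / (64%:R * 200%:R * 203%:R) by rewrite /rho aa_val qq_val; field.
have -> : bb R = (64%:R * 201%:R + 63%:R) / (64%:R * 200%:R * 200%:R) by rewrite /bb aa_val qq_val expr2; field.
lra.
Qed.

Lemma rho_ge0 (R : realFieldType) : 0 <= rho R.
Proof. have -> : rho R = (201%:R * (64%:R * 201%:R + 63%:R)) / (64%:R * 200%:R * 203%:R) by rewrite /rho aa_val qq_val; field.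
lra. Qed.

Lemma bb_ge0 (R : realFieldType) : 0 <= bb R.
Proof. have -> : bb R = (64%:R * 201%:R + 63%:R) / (64%:R * 200%:R * 200%:R) by rewrite /bb aa_val qq_val expr2; field.
lra. Qed.

Lemma main_bound (R : realFieldType) d s : (4 <= d)%N ->
  exp_from 1 (s * d) (Psi R s 0) (L0 d) <= 200%:R * d%:R.
Proof.
move=> d4; have d0 : (0 < d)%N by apply: leq_trans d4.
have D0 := ler0n R d.
elim: s => [|s IH].
  rewrite mul0n /= /Psi Vf0 /Phit.
  rewrite (eq_bigr (fun _ => aa R ^+ 2 - aa R)); last by move=> i _; rewrite /ee ffunE.
  rewrite sumr_const card_ord -[(_ - _) *+ d]mulr_natr.
  have := numeric1 R => hn; nra.
rewrite mulSnr exp_from_split.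
have inner : forall L : state d, Inv (s * d) L ->
    exp_from (1 + s * d) d (Psi R s.+1 0) L <= rho R * Psi R s 0 L + bb R * d%:R.
  move=> L hI; apply: (le_trans _ (transition R d4 hI)).
  have := @stage_lemma R d s.+1 d L d0 (ltn0Sn _) (leqnn _).
  rewrite mulSnr addnK add1n; apply.
  by move=> i; have := Inv_J d0 hI i; lia.
have b0 : 0 <= bb R * d%:R by apply: mulr_ge0; [apply: bb_ge0|].
have H := @exp_from_affine R d (s * d) 1 (exp_from (1 + s * d) d (Psi R s.+1 0))
   (Psi R s 0) (rho R) (bb R * d%:R) (L0 d) (ltn0Sn 0) (rho_ge0 R) b0 (Inv0 d)
   (fun L' h => inner L' h).
apply: (le_trans H).
have := rho_ge0 R => r0.
have := ler_wpM2l r0 IH.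
have := numeric2 R => hn.
have : (rho R * 200%:R + bb R) * d%:R <= 200%:R * d%:R by apply: ler_wpM2r.
nra.
Qed.


Lemma Phi_holes (R : realFieldType) d s (L : state d) : J s L ->
  Phi R (holes s L) = \sum_(i < d) aa R ^+ ee s L i.
Proof.
move=> hJ; rewrite /Phi; apply: eq_bigr => i _.
rewrite /holes subzn; last by have := hJ i; lia.
by [].
Qed.

Lemma Phi_Phit (R : realFieldType) d s (L : state d) : J s L ->
  Phi R (holes s L) = Phit R s L + d%:R * aa R.
Proof.
move=> hJ; rewrite Phi_holes // /Phit sumrB sumr_const card_ord mulr_natl.
by rewrite subrK.
Qed.

Lemma ee_bound d s (L : state d) i : (0 < d)%N -> Inv (s * d) L -> (ee s L i <= d.+1)%N.
Proof.
move=> d0 [hs hb].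
have h1 : (\sum_(j < d | j != i) L j <= \sum_(j < d | j != i) s.+1)%N.
  by apply: leq_sum => j _; have := hb j; rewrite ceil_mul // addn1.
have h2 : (\sum_(j < d) s.+1 = s.+1 + \sum_(j < d | j != i) s.+1)%N by rewrite (bigD1 i).
move: hs; rewrite (bigD1 i) //= => hs.
move: h2; rewrite sum_nat_const card_ord => h2.
have e : (d * s.+1 = s * d + d)%N by rewrite mulnS mulnC addnC.
move: h2; rewrite e => h2.
set S := (\sum_(j < d | j != i) L j)%N in h1 hs. set T := (\sum_(j < d | j != i) s.+1)%N in h1 h2. rewrite /ee; lia.
Qed.

Lemma aa4 (R : realFieldType) : aa R ^+ 4 <= 2%:R.
Proof.
have h1 : aa R <= 11%:R / 10%:R by rewrite aa_val; lra.
have h0 := aa_ge1 R.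
have h2 : aa R * aa R <= 121%:R / 100%:R by nra.
have h3 : 0 <= aa R * aa R by nra.
rewrite (_ : 4%N = (2 + 2)%N) // exprD expr2; nra.
Qed.

Unset Implicit Arguments.

Theorem corollary3p5 (R : realType) :
  exists C : R, forall (n d : nat), (0 < d)%N -> (d %| n)%N ->
    forall tau : nat, (tau * d <= n - 2 * d)%N ->
      expected_Phi R d tau <= C * d%:R.
Proof.
exists 202%:R => n d d0 _ tau _.
rewrite /expected_Phi.
have D0 := ler0n R d.
have a1 := aa_ge1 R; have q0 := qq_ge0 R.
case: (leqP 4 d) => d4.
- set r : R := (1 + 2%:R * qq R)^-1.
  have r0 : 0 <= r by rewrite invr_ge0; lra.
  have r1 : r <= 1 by rewrite invf_le1; lra.
  have b0 : 0 <= d%:R * aa R by apply: mulr_ge0; lra.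
  have hyp : forall L' : state d, Inv (1.-1 + tau * d) L' ->
      Phi R (holes tau L') <= r * Psi R tau 0 L' + d%:R * aa R.
    move=> L'; rewrite add0n => hI.
    rewrite Phi_Phit; last by apply: Inv_J.
    have e : r * (Phit R tau L' * (1 + 2%:R * qq R)) = Phit R tau L'.
      have hpos : (0:R) < 1 + 2%:R * qq R by lra.
      by rewrite /r mulrC -mulrA mulfV ?mulr1 // lt0r_neq0.
    by rewrite /Psi Vf0 e.
  have H := @exp_from_affine R d (tau * d) 1 (fun L => Phi R (holes tau L)) (Psi R tau 0)
     r (d%:R * aa R) (L0 d) (ltn0Sn 0) r0 b0 (Inv0 d) hyp.
  apply: (le_trans H).
  have hm := main_bound R tau d4.
  have : r * exp_from 1 (tau * d) (Psi R tau 0) (L0 d) <= r * (200%:R * d%:R).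
    by apply: ler_wpM2l.
  have : r * (200%:R * d%:R) <= 200%:R * d%:R.
    by rewrite -[X in _ <= X]mul1r; apply: ler_wpM2r => //; apply: mulr_ge0; lra.
  have : aa R <= 2%:R by rewrite aa_val; lra.
  nra.
- have b0 : (0 : R) <= 202%:R * d%:R by apply: mulr_ge0; lra.
  have hyp : forall L' : state d, Inv (1.-1 + tau * d) L' ->
      Phi R (holes tau L') <= 0 * Psi R tau 0 L' + 202%:R * d%:R.
    move=> L'; rewrite add0n mul0r add0r => hI.
    rewrite Phi_holes; last by apply: Inv_J.
    apply: le_trans (_ : \sum_(i < d) aa R ^+ 4 <= _).
      apply: ler_sum => i _; apply: ler_weXn2l => //.
      by have := ee_bound i d0 hI; lia.
    rewrite sumr_const card_ord -[_ *+ d]mulr_natr.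
    have := aa4 R; nra.
  have H := @exp_from_affine R d (tau * d) 1 (fun L => Phi R (holes tau L)) (Psi R tau 0)
     0 (202%:R * d%:R) (L0 d) (ltn0Sn 0) (lexx 0) b0 (Inv0 d) hyp.
  apply: (le_trans H); rewrite mul0r add0r; exact: lexx.
Qed.
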